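(* Let $W$ be any BISO channel and let $\eta=\eta_{KL}(W)$. Then $$\mathrm{BEC}(1-\eta)\succeq_{\mathrm{l.n.}} W\succeq_{\mathrm{l.n.}}\mathrm{BSC}\Big(\tfrac{1-\sqrt{\eta}}{2}\Big).$$ (Note $\eta_{KL}(\mathrm{BEC}(1-\eta))=\eta_{KL}(\mathrm{BSC}(\frac{1-\sqrt\eta}{2}))=\eta$, so among BISO channels with a fixed KL contraction coefficient, the BEC is maximal and the BSC minimal in the less noisy order.)
   Context: A binary-input symmetric-output (BISO) channel is a channel $P_{Y|X}$ with input alphabet $\{0,1\}$ and finite output alphabet $\mathcal Y=\{0,\pm1,\dots,\pm l\}$ for some integer $l\ge 1$ (some transition probabilities may be zero), such that $P_{Y|X}(y|0)=P_{Y|X}(-y|1)=:p_y$ for all $y\in\mathcal Y$. $\mathrm{BSC}(p)$ is the binary symmetric channel on $\{0,1\}$ with crossover probability $p$; $\mathrm{BEC}(\varepsilon)$ is the binary erasure channel with input $\{0,1\}$, output $\{0,e,1\}$, mapping input $x$ to $x$ with probability $1-\varepsilon$ and to the erasure symbol $e$ with probability $\varepsilon$. The KL contraction coefficient is $\eta_{KL}(P)=\sup_{P_X,Q_X}\frac{D(P\circ P_X\|P\circ Q_X)}{D(P_X\|Q_X)}$ (supremum over input distributions with $0<D(P_X\|Q_X)<\infty$, $P\circ P_X$ the output distribution). For channels $P_{Y|X},Q_{Y'|X}$ with the same input alphabet, $P\succeq_{\mathrm{l.n.}}Q$ (less noisy) means: for every finite-alphabet random variable $U$ and every joint distribution $P_{UX}$,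 with $U-X-Y$ and $U-X-Y'$ Markov chains, $I(U:Y)\ge I(U:Y')$. *)

(* Defs.v *)
From mathcomp Require Import all_boot all_order all_algebra.
From mathcomp Require Import boolp classical_sets reals exp.
Set Implicit Arguments. Unset Strict Implicit. Unset Printing Implicit Defensive.
Import Order.TTheory GRing.Theory Num.Theory.
Local Open Scope ring_scope.
Local Open Scope classical_set_scope.

Section Defs.
Variable R : realType.

Definition is_dist (T : finType) (P : T -> R) : Prop :=
  (forall t, 0 <= P t) /\ \sum_t P t = 1.

Definition is_channel (X Y : finType) (W : X -> Y -> R) : Prop :=
  forall x, is_dist (W x).

Definition chan_out (X Y : finType) (W : X -> Y -> R) (P : X -> R) : Y -> R :=
  fun y => \sum_x P x * W x y.

(* P << Q : D(P||Q) is finite exactly when this holds *)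
Definition abs_cont (T : finType) (P Q : T -> R) : Prop :=
  forall t, Q t = 0 -> P t = 0.

(* KL divergence (natural log, convention 0 ln 0 = 0); it is the true
   value of D(P||Q) whenever abs_cont P Q holds *)
Definition KLdiv (T : finType) (P Q : T -> R) : R :=
  \sum_t (if P t == 0 then 0 else P t * ln (P t / Q t)).

Definition etaKL (X Y : finType) (W : X -> Y -> R) : R :=
  sup [set r | exists P Q : X -> R,
         [/\ is_dist P, is_dist Q, abs_cont P Q, 0 < KLdiv P Q &
             r = KLdiv (chan_out W P) (chan_out W Q) / KLdiv P Q]].

(* mutual information I(U:Y) where U - X - Y, P_UX a joint distribution
   and Y obtained from X through W: I(U:Y) = D(P_UY || P_U x P_Y) *)
Definition joint_UY (U X Y : finType) (PUX : U * X -> R) (W : X -> Y -> R)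
  : U * Y -> R := fun uy => \sum_x PUX (uy.1, x) * W x uy.2.
Definition marg1 (A B : finType) (P : A * B -> R) : A -> R :=
  fun a => \sum_b P (a, b).
Definition marg2 (A B : finType) (P : A * B -> R) : B -> R :=
  fun b => \sum_a P (a, b).
Definition mutinf (U X Y : finType) (PUX : U * X -> R) (W : X -> Y -> R) : R :=
  let PUY := joint_UY PUX W in
  KLdiv PUY (fun uy => marg1 PUY uy.1 * marg2 PUY uy.2).

Definition less_noisy (X Y Y' : finType) (W : X -> Y -> R) (V : X -> Y' -> R)
  : Prop :=
  forall (U : finType) (PUX : U * X -> R), is_dist PUX ->
    mutinf PUX V <= mutinf PUX W.

(* BSC(p) on {0,1} (false = 0, true = 1) *)
Definition BSC (p : R) : bool -> bool -> R :=
  fun x y => if x == y then 1 - p else p.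

(* BEC(e): output option bool, None = erasure symbol e *)
Definition BEC (e : R) : bool -> option bool -> R :=
  fun x y => match y with
             | None => e
             | Some b => if b == x then 1 - e else 0
             end.

(* BISO channel with output alphabet {-l,...,-1,0,1,...,l}, encoded as
   'I_(2l+1) where index i stands for the integer i - l; negation y |-> -y
   is i |-> 2l - i. Given p_y = P(y|0), P(y|1) = p_{-y}. *)
Definition biso_neg (l : nat) (i : 'I_(l.*2.+1)) : 'I_(l.*2.+1) := rev_ord i.
Definition biso (l : nat) (p : 'I_(l.*2.+1) -> R) : bool -> 'I_(l.*2.+1) -> R :=
  fun x y => if x then p (biso_neg y) else p y.

End Defs.

(* Main.v *)
Require Import Defs.
From mathcomp Require Import all_boot all_order all_algebra.
From mathcomp Require Import all_classical all_reals.
From mathcomp Require Import topology normedtype derive realfun exp.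
From mathcomp Require Import ring lra.
Set Implicit Arguments. Unset Strict Implicit. Unset Printing Implicit Defensive.
Import Order.TTheory GRing.Theory Num.Theory.
Import numFieldNormedType.Exports.
Local Open Scope ring_scope.
Local Open Scope classical_set_scope.

Section P.
Variable R : realType.

Definition Tf (p q : R) := if p == 0 then 0 else p * ln (p / q).

Lemma KLdivE (T : finType) (P Q : T -> R) : KLdiv P Q = \sum_t Tf (P t) (Q t).
Proof. by []. Qed.

Lemma Tf0 q : Tf 0 q = 0.
Proof. by rewrite /Tf eqxx. Qed.

Lemma Tf_scale c p q : Tf (c * p) (c * q) = c * Tf p q.
Proof.
rewrite /Tf; have [->|c0] := eqVneq c 0; first by rewrite !mul0r eqxx.
rewrite mulf_eq0 (negbTE c0) /=; case: eqP => [_|_]; first by rewrite mulr0.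
have -> : c * p / (c * q) = p / q.
  by rewrite invfM mulrACA mulfV // mul1r.
by rewrite mulrA.
Qed.

Lemma Tf_scaler c p q : Tf (p * c) (q * c) = c * Tf p q.
Proof. by rewrite ![_ * c]mulrC Tf_scale. Qed.

Lemma Tf_refl p : Tf p p = 0.
Proof.
rewrite /Tf; case: eqP => // /eqP p0.
by rewrite mulfV // ln1 mulr0.
Qed.

Lemma ln_le_sub1 (x : R) : 0 < x -> ln x <= x - 1.
Proof.
move=> x0; have := @le_ln1Dx R (x - 1).
by rewrite (_ : 1 + (x - 1) = x); last ring; apply; lra.
Qed.

Lemma Tf_ge p q : 0 <= p -> 0 <= q -> (q = 0 -> p = 0) -> p - q <= Tf p q.
Proof.
move=> p0 q0 hq; rewrite /Tf.
have [->|pn] := eqVneq p 0; first by lra.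
have pp : 0 < p by rewrite lt_def pn.
have qp : 0 < q by rewrite lt_def q0 andbT; apply/eqP => /hq /eqP; rewrite (negbTE pn).
have := ln_le_sub1 (divr_gt0 qp pp).
move=> h; rewrite ln_div ?posrE // in h.
have : p * (ln q - ln p) <= p * (q / p - 1) by rewrite ler_pM2l.
have -> : p * (q / p - 1) = q - p by field; rewrite gt_eqF.
rewrite ln_div ?posrE //; lra.
Qed.

Lemma Tf_half (u w : R) : 0 <= u -> 0 < w -> Tf (u / 2) (w / 2) = (u * ln u - u * ln w) / 2.
Proof.
move=> u0 w0; rewrite /Tf.
have [->|un] := eqVneq u 0; first by rewrite !mul0r eqxx subrr mul0r.
have up : 0 < u by rewrite lt_def un.
rewrite mulf_eq0 (negbTE un) /= invr_eq0 pnatr_eq0 /=.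
have -> : u / 2 / (w / 2) = u / w by field; rewrite gt_eqF.
by rewrite ln_div ?posrE //; ring.
Qed.


Lemma mutinf_dec (U X Y : finType) (PUX : U * X -> R) (V : X -> Y -> R) :
  is_dist PUX -> (forall x, \sum_y V x y = 1) ->
  mutinf PUX V = \sum_u marg1 PUX u *
    KLdiv (chan_out V (fun x => PUX (u, x) / marg1 PUX u)) (chan_out V (marg2 PUX)).
Proof.
move=> [P0 P1] hV.
rewrite /mutinf KLdivE.
set PUY := joint_UY PUX V.
have m1 u : marg1 PUY u = marg1 PUX u.
  rewrite /marg1 /PUY /joint_UY /= exchange_big /=; apply: eq_bigr => x _.
  by rewrite -mulr_sumr hV mulr1.
have m2 y : marg2 PUY y = chan_out V (marg2 PUX) y.
  rewrite /marg2 /PUY /joint_UY /chan_out /= exchange_big /=; apply: eq_bigr => x _.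
  by rewrite mulr_suml.
rewrite (eq_bigr (fun p => Tf (PUY (p.1, p.2)) (marg1 PUY p.1 * marg2 PUY p.2))); last by case.
rewrite -(pair_bigA _ (fun u y => Tf (PUY (u, y)) (marg1 PUY u * marg2 PUY y))) /=.
apply: eq_bigr => u _; rewrite KLdivE m1.
have [w0|wn] := eqVneq (marg1 PUX u) 0.
  have z x : PUX (u, x) = 0.
    move: w0; rewrite /marg1 => /eqP; rewrite psumr_eq0; last by move=> *; exact: P0.
    by move=> /allP /(_ x (mem_index_enum _)) /implyP /(_ isT) /eqP.
  rewrite w0 mul0r; apply: big1 => y _.
  rewrite /PUY /joint_UY /= big1 ?Tf0 // => x _; by rewrite z mul0r.
rewrite mulr_sumr; apply: eq_bigr => y _; rewrite m2 -Tf_scale; congr Tf.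
rewrite /PUY /joint_UY /chan_out /= mulr_sumr; apply: eq_bigr => x _.
by field.
Qed.
End P.

Section D.
Variable R : realType.
Implicit Types (f g : R -> R) (a b c y : R).

Lemma dD f g a b y : is_derive y 1 f a -> is_derive y 1 g b ->
  is_derive y 1 (fun t => f t + g t) (a + b).
Proof. by move=> ha hb; exact: (@is_deriveD _ _ _ f g). Qed.
Lemma dB f g a b y : is_derive y 1 f a -> is_derive y 1 g b ->
  is_derive y 1 (fun t => f t - g t) (a - b).
Proof. by move=> ha hb; exact: (@is_deriveB _ _ _ f g). Qed.
Lemma dM f g a b y : is_derive y 1 f a -> is_derive y 1 g b ->
  is_derive y 1 (fun t => f t * g t) (f y * b + g y * a).
Proof. by move=> ha hb; exact: (@is_deriveM _ _ f g). Qed.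
Lemma dC c y : is_derive y 1 (fun _ : R => c) 0.
Proof. exact: is_derive_cst. Qed.
Lemma dI y : is_derive y 1 (fun t : R => t) 1.
Proof. exact: is_derive_id. Qed.
Lemma dV f a y : is_derive y 1 f a -> f y != 0 ->
  is_derive y 1 (fun t => (f t)^-1) (- a / (f y) ^+ 2).
Proof.
move=> h2 h1; have := is_deriveV h1 h2.
by rewrite [_ *: _]mulrC mulrN mulNr.
Qed.
Lemma dE f a b y : is_derive y 1 f a -> a = b -> is_derive y 1 f b.
Proof. by move=> ? <-. Qed.

Lemma xlnx_small (z e : R) : 0 < e -> `|z| < Num.min 1 ((e / 2) ^+ 2) -> `|z * ln z| < e.
Proof.
move=> e0; rewrite lt_min => /andP[z1 ze].
have [z0|z0] := leP z 0; first by rewrite ln0 // mulr0 normr0.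
have lnz : ln z < 0 by apply: ln_lt0; rewrite z0 /=; move: z1; rewrite gtr0_norm.
rewrite ltr0_norm; last by rewrite pmulr_rlt0.
set s := Num.sqrt z.
have s0 : 0 < s by rewrite sqrtr_gt0.
have zs : z = s ^+ 2 by rewrite sqr_sqrtr // ltW.
have lns : ln z = 2 * ln s by rewrite zs lnXn // mulr2n mulr_natl mulr2n.
have hs : - ln s < s^-1.
  by rewrite -lnV ?posrE // ln_sublinear // invr_gt0.
have se : s < e / 2.
  rewrite gtr0_norm // in ze.
  by rewrite -(@ltr_pXn2r _ 2) ?nnegrE ?ltW ?divr_gt0 // -zs.
have -> : - (z * ln z) = (2 * s ^+ 2) * (- ln s) by rewrite lns zs; ring.
apply: (@lt_le_trans _ _ ((2 * s ^+ 2) * s^-1)).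
  by rewrite ltr_pM2l // mulr_gt0 // exprn_gt0.
have -> : (2 * s ^+ 2) * s^-1 = 2 * s by field; rewrite gt_eqF.
by rewrite -lter_pdivlMl // mulrC ltW.
Qed.

Lemma phi_cont0 : {for 0, continuous (fun z : R => z * ln z)}.
Proof.
rewrite /prop_for /continuous_at /= mul0r.
apply/cvgr0Pnorm_lt => e e0.
have m0 : 0 < Num.min 1 ((e / 2) ^+ 2) :> R.
  by rewrite lt_min ltr01 /= exprn_gt0 // divr_gt0.
near=> z; apply: xlnx_small => //.
Unshelve. all: try by end_near. Qed.

Lemma der_lin (c y : R) : is_derive y 1 (fun y : R => 1 + y * c) c.
Proof.
have H := dD (dC 1 y) (dM (dI y) (dC c y)).
apply: dE H _; ring.
Qed.

Lemma der_lnlin (c y : R) : 0 < 1 + y * c ->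
  is_derive y 1 (fun y : R => ln (1 + y * c)) (c / (1 + y * c)).
Proof.
move=> hp.
have := @is_derive1_comp R (@ln R) (fun y : R => 1 + y * c) y _ _ (is_derive1_ln hp) (der_lin c y).
by rewrite mulrC.
Qed.

Lemma der_cont f a y : is_derive y 1 f a -> {for y, continuous f}.
Proof.
move=> [hd _]; apply/differentiable_continuous; exact/derivable1_diffP.
Qed.

Lemma mono_up (f df : R -> R) (a b : R) : a <= b ->
  (forall z : R, a < z < b -> is_derive z 1 f (df z)) ->
  (forall z, a < z < b -> 0 <= df z) ->
  (forall z, a <= z <= b -> {for z, continuous f}) -> f a <= f b.
Proof.
move=> ab hd hpos hc.
case: (ltgtP a b) ab => // [altb _|-> _]; last by [].
have hd' : forall z, z \in `]a, b[%R -> is_derive z 1 f (df z).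
  by move=> z; rewrite in_itv /= => hz; exact: hd.
have hcw : {within `[a, b], continuous f}.
  apply: continuous_in_subspaceT => z; rewrite inE /= in_itv /= => hz.
  exact: hc.
have [c cab E] := MVT altb hd' hcw.
rewrite -subr_ge0 E mulr_ge0 // ?subr_ge0 ?(ltW altb) //.
by apply: hpos; rewrite in_itv /= in cab.
Qed.

Lemma mono_down (f df : R -> R) (a b : R) : a <= b ->
  (forall z : R, a < z < b -> is_derive z 1 f (df z)) ->
  (forall z, a < z < b -> df z <= 0) ->
  (forall z, a <= z <= b -> {for z, continuous f}) -> f b <= f a.
Proof.
move=> ab hd hpos hc.
rewrite -lerN2; apply: (@mono_up (fun t => - f t) (fun t => - df t)) => //.
- move=> z hz; have H := hd z hz; exact: (is_deriveN H).
- by move=> z hz; rewrite oppr_ge0; exact: hpos.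
- move=> z hz; apply: continuousN; exact: hc.
Qed.
End D.

Section H.
Variables (R : realType) (A B : R).

Definition lp (c y : R) := ln (1 + y * c).
Definition hh (y : R) := ((1 + y * A) * lp A y + (1 + y * (- A)) * lp (- A) y
   - (1 + y * A) * lp B y - (1 + y * (- A)) * lp (- B) y) * 2^-1.
Definition h1 (y : R) := A * (lp A y - lp (- A) y - lp B y + lp (- B) y) * 2^-1
   + y * B * (B - A) * (1 - y * y * (B * B))^-1.
Definition h2 (y : R) := A * A * (1 - y * y * (A * A))^-1
   - A * B * (1 - y * y * (B * B))^-1
   + B * (B - A) * (1 + y * y * (B * B)) * ((1 - y * y * (B * B)) ^-1 * (1 - y * y * (B * B)) ^-1).
Definition h3 (y : R) := 2 * y * (A ^+ 4 / (1 - y ^+ 2 * A ^+ 2) ^+ 2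
   - A * B ^+ 3 / (1 - y ^+ 2 * B ^+ 2) ^+ 2
   + B ^+ 3 * (B - A) * (3 + y ^+ 2 * B ^+ 2) / (1 - y ^+ 2 * B ^+ 2) ^+ 3).

Definition posd (y : R) := [/\ 0 < 1 + y * A, 0 < 1 + y * (- A), 0 < 1 + y * B & 0 < 1 + y * (- B)].

Lemma der_xlnx (c d y : R) : 0 < 1 + y * d ->
  is_derive y 1 (fun t => (1 + t * c) * lp d t) ((1 + y * c) * (d / (1 + y * d)) + lp d y * c).
Proof. move=> h; exact: (dM (der_lin c y) (der_lnlin h)). Qed.

Lemma der_hh y : posd y -> is_derive y 1 hh (h1 y).
Proof.
case=> p1 p2 p3 p4.
have H := dM (dB (dB (dD (der_xlnx A p1) (der_xlnx (- A) p2)) (der_xlnx A p3)) (der_xlnx (- A) p4)) (dC 2^-1 y).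
apply: dE H _.
rewrite /h1.
have n1 : 1 + y * A != 0 by rewrite gt_eqF.
have n2 : 1 + y * - A != 0 by rewrite gt_eqF.
have n3 : 1 + y * B != 0 by rewrite gt_eqF.
have n4 : 1 + y * - B != 0 by rewrite gt_eqF.
have n5 : 1 - y * y * (B * B) != 0.
  have -> : 1 - y * y * (B * B) = (1 + y * B) * (1 + y * - B) by ring.
  by rewrite mulf_neq0.
by field; rewrite n1 n2 n3 n4 n5.
Qed.

Lemma der_q (c y : R) : is_derive y 1 (fun t : R => 1 - t * t * c) (- (y + y) * c).
Proof.
apply: dE (dB (dC 1 y) (dM (dM (dI y) (dI y)) (dC c y))) _; ring.
Qed.

Lemma posd_nz y : posd y -> [/\ 1 + y * A != 0, 1 + y * - A != 0, 1 + y * B != 0,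
  1 + y * - B != 0 & (1 - y * y * (B * B) != 0 /\ 1 - y * y * (A * A) != 0)].
Proof.
case=> p1 p2 p3 p4; split; [by rewrite gt_eqF|by rewrite gt_eqF|by rewrite gt_eqF|by rewrite gt_eqF|split].
  have -> : 1 - y * y * (B * B) = (1 + y * B) * (1 + y * - B) by ring.
  by rewrite mulf_neq0 // gt_eqF.
have -> : 1 - y * y * (A * A) = (1 + y * A) * (1 + y * - A) by ring.
by rewrite mulf_neq0 // gt_eqF.
Qed.

Lemma der_h1 y : posd y -> is_derive y 1 h1 (h2 y).
Proof.
move=> hp; have [n1 n2 n3 n4 [n5 n6]] := posd_nz hp; case: hp => p1 p2 p3 p4.
have HL := dM (dM (dC A y) (dD (dB (dB (der_lnlin p1) (der_lnlin p2)) (der_lnlin p3)) (der_lnlin p4))) (dC 2^-1 y).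
have HR := dM (dM (dM (dI y) (dC B y)) (dC (B - A) y)) (dV (der_q (B * B) y) n5).
apply: dE (dD HL HR) _.
rewrite /h2.
by field; rewrite n1 n2 n3 n4 n5 n6.
Qed.

Lemma der_h2 y : posd y -> is_derive y 1 h2 (h3 y).
Proof.
move=> hp; have [n1 n2 n3 n4 [n5 n6]] := posd_nz hp; case: hp => p1 p2 p3 p4.
have H1 := dM (dC (A * A) y) (dV (der_q (A * A) y) n6).
have H2 := dM (dC (A * B) y) (dV (der_q (B * B) y) n5).
have H3 := dM (dM (dC (B * (B - A)) y) (dD (dC 1 y) (dM (dM (dI y) (dI y)) (dC (B * B) y))))
   (dM (dV (der_q (B * B) y) n5) (dV (der_q (B * B) y) n5)).
apply: dE (dD (dB H1 H2) H3) _.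
rewrite /h3.
have eB : (y * B) ^+ 2 = y * y * (B * B) by ring.
have eA : (y * A) ^+ 2 = y * y * (A * A) by ring.
by field; rewrite eA eB n5 n6.
Qed.

Lemma F_ge0 (a b : R) : 0 < 1 - a * a -> 0 < 1 - b * b ->
  0 <= a ^+ 4 / (1 - a ^+ 2) ^+ 2 - a * b ^+ 3 / (1 - b ^+ 2) ^+ 2
       + b ^+ 3 * (b - a) * (3 + b ^+ 2) / (1 - b ^+ 2) ^+ 3.
Proof.
move=> ha hb.
have na : 1 - a ^+ 2 != 0 by rewrite expr2 gt_eqF.
have nb : 1 - b ^+ 2 != 0 by rewrite expr2 gt_eqF.
set pa := a ^+ 2 / (1 - a ^+ 2).
set pb := b ^+ 2 / (1 - b ^+ 2).
have -> : a ^+ 4 / (1 - a ^+ 2) ^+ 2 - a * b ^+ 3 / (1 - b ^+ 2) ^+ 2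
       + b ^+ 3 * (b - a) * (3 + b ^+ 2) / (1 - b ^+ 2) ^+ 3 =
   (pa - pb) ^+ 2 + 2 * pb * ((a - b) ^+ 2 * ((a + b) ^+ 2 + (1 - a ^+ 2)))
      / ((1 - a ^+ 2) * (1 - b ^+ 2) ^+ 2).
  by rewrite /pa /pb; field; rewrite na nb.
have pb0 : 0 <= pb by rewrite /pb divr_ge0 ?sqr_ge0 // expr2 ltW.
rewrite addr_ge0 ?sqr_ge0 //.
apply: divr_ge0.
  apply: mulr_ge0; first by apply: mulr_ge0.
  apply: mulr_ge0; first exact: sqr_ge0.
  by apply: addr_ge0; [exact: sqr_ge0| rewrite expr2; exact: ltW].
by apply: mulr_ge0; [rewrite expr2; exact: ltW| apply: exprn_ge0; rewrite expr2; exact: ltW].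
Qed.

Hypothesis hA : -1 <= A <= 1.
Hypothesis hB : -1 < B < 1.

Lemma posd_of (z : R) : -1 < z < 1 -> posd z.
Proof.
have key (c : R) : -1 <= c <= 1 -> -1 < z < 1 -> 0 < 1 + z * c.
  case/andP => c1 c2; case/andP => z1 z2.
  have [c0|c0] := leP 0 c.
    have : 0 <= (z + 1) * c by apply: mulr_ge0; lra.
    nra.
  have : 0 < (1 - z) * (- c) by apply: mulr_gt0; lra.
  nra.
move=> hz; case/andP: hA => a1 a2; case/andP: hB => b1 b2.
split; apply: key => //; apply/andP; split; lra.
Qed.

Lemma h3_ge0 (y : R) : 0 <= y < 1 -> 0 <= h3 y.
Proof.
case/andP => y0 y1.
have [->|yp] := eqVneq y 0; first by rewrite /h3 mulr0 mul0r.
have ypos : 0 < y by rewrite lt_def yp.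
have hp : posd y by apply: posd_of; apply/andP; split; lra.
have [n1 n2 n3 n4 [n5 n6]] := posd_nz hp.
have hFa : 0 < 1 - (y * A) * (y * A).
  by have := n6; case/andP: hA => ? ?; move=> _; nra.
have hFb : 0 < 1 - (y * B) * (y * B).
  by have := n5; case/andP: hB => ? ?; move=> _; nra.
have := F_ge0 hFa hFb.
have eA : 1 - (y * A) ^+ 2 = 1 - y ^+ 2 * A ^+ 2 by ring.
have eB : 1 - (y * B) ^+ 2 = 1 - y ^+ 2 * B ^+ 2 by ring.
have nA : 1 - y ^+ 2 * A ^+ 2 != 0 by rewrite -eA expr2 gt_eqF.
have nB : 1 - y ^+ 2 * B ^+ 2 != 0 by rewrite -eB expr2 gt_eqF.
set F := (X in 0 <= X -> _).
have -> : h3 y = 2 / y ^+ 3 * F.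
  by rewrite /h3 /F; field; rewrite eA eB nA nB yp.
move=> F0; rewrite mulr_ge0 // divr_ge0 // exprn_ge0 // ltW.
Qed.

Definition psi (y : R) := y * h2 y - h1 y.
Definition KK (y : R) := h1 y / y.

Lemma lp0 c : lp c 0 = 0.
Proof. by rewrite /lp mul0r addr0 ln1. Qed.

Lemma h1_0 : h1 0 = 0.
Proof. by rewrite /h1 !lp0 !subrr add0r !mulr0 mul0r !mul0r addr0. Qed.

Lemma posd_01 (t : R) : 0 <= t < 1 -> posd t.
Proof. by move=> /andP[? ?]; apply: posd_of; apply/andP; split; lra. Qed.

Lemma psi_ge0 (y : R) : 0 <= y < 1 -> 0 <= psi y.
Proof.
case/andP => y0 y1.
have -> : 0 = psi 0 by rewrite /psi h1_0 mul0r subr0.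
apply: (@mono_up _ psi (fun t => t * h3 t)) => //.
- move=> t /andP[t0 t1].
  have p : posd t by apply: posd_01; apply/andP; split; lra.
  apply: dE (dB (dM (dI t) (der_h2 p)) (der_h1 p)) _; ring.
- move=> t /andP[t0 t1]; apply: mulr_ge0; first lra.
  apply: h3_ge0; apply/andP; split; lra.
- move=> t /andP[t0 t1].
  have p : posd t by apply: posd_01; apply/andP; split; lra.
  exact: der_cont (dB (dM (dI t) (der_h2 p)) (der_h1 p)).
Qed.

Lemma KK_mono (y1 y2 : R) : 0 < y1 -> y1 <= y2 -> y2 < 1 -> KK y1 <= KK y2.
Proof.
move=> y10 y12 y21.
apply: (@mono_up _ KK (fun t => psi t / t ^+ 2)) => //.
- move=> t /andP[t0 t1].
  have p : posd t by apply: posd_01; apply/andP; split; lra.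
  have tn : t != 0 by rewrite gt_eqF //; lra.
  apply: dE (dM (der_h1 p) (dV (dI t) tn)) _.
  by rewrite /psi; field.
- move=> t /andP[t0 t1]; apply: divr_ge0; last exact: sqr_ge0.
  apply: psi_ge0; apply/andP; split; lra.
- move=> t /andP[t0 t1].
  have p : posd t by apply: posd_01; apply/andP; split; lra.
  have tn : t != 0 by rewrite gt_eqF //; lra.
  exact: der_cont (dM (der_h1 p) (dV (dI t) tn)).
Qed.

Lemma cD (f g : R -> R) z : {for z, continuous f} -> {for z, continuous g} ->
  {for z, continuous (fun t => f t + g t)}.
Proof. exact: continuousD. Qed.
Lemma cB (f g : R -> R) z : {for z, continuous f} -> {for z, continuous g} ->
  {for z, continuous (fun t => f t - g t)}.
Proof. exact: continuousB. Qed.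
Lemma cM (f g : R -> R) z : {for z, continuous f} -> {for z, continuous g} ->
  {for z, continuous (fun t => f t * g t)}.
Proof. exact: continuousM. Qed.

Lemma cphi (c z : R) : 0 <= 1 + z * c ->
  {for z, continuous (fun t : R => (1 + t * c) * lp c t)}.
Proof.
move=> hz.
have -> : (fun t : R => (1 + t * c) * lp c t) = (fun u : R => u * ln u) \o (fun t : R => 1 + t * c).
  by [].
apply: continuous_comp; first exact: der_cont (der_lin c z).
rewrite /=; case: (ltgtP 0 (1 + z * c)) hz => // [hp _|<- _]; last exact: phi_cont0.
exact: der_cont (dM (dI (1 + z * c)) (is_derive1_ln hp)).
Qed.

Lemma hh_cont (z : R) : 0 <= z <= 1 -> {for z, continuous hh}.
Proof.
case/andP => z0 z1; case/andP: hA => a1 a2; case/andP: hB => b1 b2.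
have q1 : 0 < 1 + z * B by nra.
have q2 : 0 < 1 + z * - B by nra.
apply: cM; last exact: der_cont (dC _ z).
apply: cB; last exact: der_cont (der_xlnx (- A) q2).
apply: cB; last exact: der_cont (der_xlnx A q1).
apply: cD; apply: cphi; nra.
Qed.

Lemma TL (x0 x : R) : 0 < x0 < 1 -> 0 <= x <= 1 ->
  hh x0 + KK x0 / 2 * (x * x - x0 * x0) <= hh x.
Proof.
case/andP => x00 x01; case/andP => x0' x1.
set c := KK x0 / 2.
set Phi := fun t => hh t - c * (t * t).
suff : Phi x0 <= Phi x by rewrite /Phi; lra.
have hder (t : R) : 0 < t < 1 -> is_derive t 1 Phi (t * (KK t - KK x0)).
  move=> /andP[t0 t1].
  have p : posd t by apply: posd_01; apply/andP; split; lra.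
  have tn : t != 0 by rewrite gt_eqF //; lra.
  apply: dE (dB (der_hh p) (dM (dC c t) (dM (dI t) (dI t)))) _.
  by rewrite /c /KK; field; rewrite tn gt_eqF.
have hcont (t : R) : 0 <= t <= 1 -> {for t, continuous Phi}.
  move=> ht; apply: cB; first exact: hh_cont.
  exact: der_cont (dM (dC c t) (dM (dI t) (dI t))).
have [hx|hx] := leP x0 x.
  apply: (@mono_up _ Phi (fun t => t * (KK t - KK x0))) => //.
  - move=> t /andP[t0 t1]; apply: hder; apply/andP; split; lra.
  - move=> t /andP[t0 t1]; apply: mulr_ge0; first lra.
    rewrite subr_ge0; apply: KK_mono; lra.
  - move=> t /andP[t0 t1]; apply: hcont; apply/andP; split; lra.
apply: (@mono_down _ Phi (fun t => t * (KK t - KK x0))); first lra.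
- move=> t /andP[t0 t1]; apply: hder; apply/andP; split; lra.
- move=> t /andP[t0 t1]; apply: mulr_ge0_le0; first lra.
  rewrite subr_le0; apply: KK_mono; lra.
- move=> t /andP[t0 t1]; apply: hcont; apply/andP; split; lra.
Qed.

Lemma hh_Tf (t : R) : 0 <= t <= 1 ->
  Tf ((1 + t * A) / 2) ((1 + t * B) / 2) + Tf ((1 + t * - A) / 2) ((1 + t * - B) / 2) = hh t.
Proof.
case/andP => t0 t1; case/andP: hA => a1 a2; case/andP: hB => b1 b2.
rewrite !Tf_half; try nra.
by rewrite /hh /lp; field.
Qed.

Lemma hh0 : hh 0 = 0.
Proof. by rewrite /hh !lp0 !mul0r !addr0 !mulr0 !subr0 addr0 mul0r. Qed.
End H.

Section H2.
Variables (R : realType) (A B : R).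
Hypothesis hA : -1 <= A <= 1.
Hypothesis hB : -1 < B < 1.
Local Notation hh := (hh A B).
Local Notation KK := (KK A B).
Local Notation TL := (TL hA hB).
Local Notation hh_Tf := (hh_Tf hA hB).
Local Notation hh0 := (@hh0 R A B).
Lemma hh_ge0 (t : R) : 0 <= t <= 1 -> 0 <= hh t.
Proof.
move=> ht; rewrite -hh_Tf //; case/andP: ht => t0 t1; case/andP: hA => a1 a2; case/andP: hB => b1 b2.
have q1 : 0 < (1 + t * B) / 2 by apply: divr_gt0 => //; nra.
have q2 : 0 < (1 + t * - B) / 2 by apply: divr_gt0 => //; nra.
have p1 : 0 <= (1 + t * A) / 2 by apply: divr_ge0 => //; nra.
have p2 : 0 <= (1 + t * - A) / 2 by apply: divr_ge0 => //; nra.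
have e1 := @Tf_ge _ _ _ p1 (ltW q1) (fun h => ltac:(by move: q1; rewrite h ltxx)).
have e2 := @Tf_ge _ _ _ p2 (ltW q2) (fun h => ltac:(by move: q2; rewrite h ltxx)).
lra.
Qed.

Lemma KK_ge0 (y : R) : 0 < y < 1 -> 0 <= KK y.
Proof.
move=> hy; have h0 : 0 <= hh y by apply: hh_ge0 => //; case/andP: hy => ? ?; apply/andP; split; lra.
have := @TL y 0 hy (ltac:(apply/andP; split; lra)).
rewrite hh0 => h.
case/andP: hy => y0 y1.
have h2 : 0 <= KK y / 2 * (y * y).
  move: h h0; set k := KK y / 2; move=> h h0.
  have -> : k * (y * y) = - (k * (0 * 0 - y * y)) by ring.
  lra.
have yy : 0 < y * y by apply: mulr_gt0.
rewrite pmulr_lge0 // in h2.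
by rewrite -(pmulr_lge0 _ (_ : 0 < 2^-1)) // invr_gt0.
Qed.
Lemma hh_mono (y x : R) : 0 <= y -> y <= x -> x <= 1 -> hh y <= hh x.
Proof.
move=> y0 yx x1.
have [->|yp] := eqVneq y 0; first by rewrite hh0; apply: hh_ge0; apply/andP; split; lra.
have [<-|yx'] := eqVneq y x; first by [].
have y1 : 0 < y < 1.
  have : y < x by rewrite lt_def eq_sym yx' yx.
  have : 0 < y by rewrite lt_def yp y0.
  move=> *; apply/andP; split; lra.
have h := @TL y x y1 (ltac:(apply/andP; split; lra)).
have k0 := KK_ge0 y1.
have : 0 <= KK y / 2 * (x * x - y * y).
  apply: mulr_ge0; first by apply: divr_ge0.
  rewrite subr_ge0; apply: ler_pM => //.
lra.
Qed.

Lemma hh_star (t : R) : 0 <= t <= 1 -> hh t <= t * t * hh 1.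
Proof.
case/andP => t0 t1.
have [->|tp] := eqVneq t 0; first by rewrite hh0 !mul0r.
have [->|tn1] := eqVneq t 1; first by rewrite !mul1r.
have ht : 0 < t < 1.
  have : 0 < t by rewrite lt_def tp t0.
  have : t < 1 by rewrite lt_def eq_sym tn1 t1.
  move=> *; apply/andP; split; lra.
have h1 := @TL t 1 ht (ltac:(apply/andP; split; lra)).
have h0 := @TL t 0 ht (ltac:(apply/andP; split; lra)).
rewrite hh0 in h0.
set k := KK t / 2 in h0 h1.
have e : t * t * hh 1 - hh t = t * t * (hh 1 - hh t - k * (1 * 1 - t * t)) + (1 - t * t) * (0 - hh t - k * (0 * 0 - t * t)).
  ring.
have tt1 : 0 <= 1 - t * t by nra.
have tt0 : 0 <= t * t by nra.
rewrite -subr_ge0 e; apply: addr_ge0; apply: mulr_ge0 => //; lra.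
Qed.
Lemma hh_jensen (I : finType) (w th : I -> R) (ts : R) :
  (forall i, 0 <= w i) -> \sum_i w i = 1 -> (forall i, 0 <= th i <= 1) ->
  0 <= ts -> ts * ts <= \sum_i w i * (th i * th i) ->
  hh ts <= \sum_i w i * hh (th i).
Proof.
move=> w0 w1 th01 ts0 tss.
set s := \sum_i w i * (th i * th i) in tss.
have thh i : 0 <= th i * th i <= 1.
  by case/andP: (th01 i) => a b; apply/andP; split; nra.
have s0 : 0 <= s.
  by apply: sumr_ge0 => i _; apply: mulr_ge0 => //; case/andP: (thh i).
have s1 : s <= 1.
  rewrite -w1; apply: ler_sum => i _; case/andP: (thh i) => a b.
  by rewrite ler_piMr.
have R0 : 0 <= \sum_i w i * hh (th i).
  by apply: sumr_ge0 => i _; apply: mulr_ge0 => //; exact: hh_ge0.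
have [sz|sp] := eqVneq s 0.
  have -> : ts = 0.
    have : ts * ts <= 0 by rewrite -sz.
    nra.
  by rewrite hh0.
have [s1e|sn1] := eqVneq s 1.
  have E : \sum_i w i * hh (th i) = \sum_i w i * hh 1.
    have Z : \sum_i w i * (1 - th i * th i) = 0.
      rewrite (eq_bigr (fun i => w i - w i * (th i * th i))); last by move=> *; ring.
      by rewrite sumrB w1 -/s s1e subrr.
    apply: eq_bigr => i _.
    have : w i * (1 - th i * th i) = 0.
      move/eqP: Z; rewrite psumr_eq0; last first.
        by move=> j _; apply: mulr_ge0 => //; case/andP: (thh j) => a b; lra.
      by move=> /allP /(_ i (mem_index_enum _)) /implyP /(_ isT) /eqP.
    move/eqP; rewrite mulf_eq0 => /orP[/eqP->|]; first by rewrite !mul0r.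
    case/andP: (th01 i) => a b.
    rewrite subr_eq0 => /eqP e.
    have -> : th i = 1 by nra.
    by [].
  rewrite E -mulr_suml w1 mul1r; apply: hh_mono => //; nra.
set x0 := Num.sqrt s.
have x0p : 0 < x0 by rewrite sqrtr_gt0 lt_def sp.
have x0s : x0 * x0 = s by rewrite -expr2 sqr_sqrtr.
have sl1 : s < 1 by rewrite lt_def eq_sym sn1 s1.
have x01 : 0 < x0 < 1.
  rewrite x0p /=; have : x0 * x0 < 1 by rewrite x0s.
  nra.
apply: (@le_trans _ _ (hh x0)).
  apply: hh_mono => //; last by case/andP: x01 => _ /ltW.
  nra.
apply: (@le_trans _ _ (\sum_i w i * (hh x0 + KK x0 / 2 * (th i * th i - x0 * x0)))).
  rewrite (eq_bigr (fun i => w i * hh x0 + (KK x0 / 2 * (w i * (th i * th i)) - KK x0 / 2 * (x0 * x0) * w i))); last by move=> *; ring.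
  rewrite big_split /= sumrB -mulr_suml -!mulr_sumr w1 -/s x0s mulr1.
  lra.
apply: ler_sum => i _; apply: ler_wpM2l => //; exact: TL.
Qed.
Lemma hh_Tf_abs (t : R) : -1 <= t <= 1 ->
  Tf ((1 + t * A) / 2) ((1 + t * B) / 2) + Tf ((1 + t * - A) / 2) ((1 + t * - B) / 2) = hh `|t|.
Proof.
move=> ht; have [t0|t0] := leP 0 t.
  by rewrite ger0_norm // hh_Tf //; case/andP: ht => *; apply/andP; split; lra.
rewrite ltr0_norm // -hh_Tf; last by case/andP: ht => *; apply/andP; split; lra.
rewrite addrC; congr (Tf _ _ + Tf _ _); congr (_ / 2); ring.
Qed.
End H2.

Section C.
Variable R : realType.
Lemma big_option (T : finType) (F : option T -> R) :
  \sum_o F o = F None + \sum_x F (Some x).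
Proof.
rewrite (bigD1 None) //=; congr (_ + _).
rewrite (reindex_omap (@Some T) id); last by case.
by apply: eq_bigl => x /=; rewrite eqxx.
Qed.

Lemma bool_sum1 (a : bool -> R) : \sum_x a x = 1 -> a false = 1 - a true.
Proof. rewrite big_bool /= => h; rewrite -h; ring. Qed.

Lemma KL_bool (P Q : bool -> R) : KLdiv P Q = Tf (P true) (Q true) + Tf (P false) (Q false).
Proof. by rewrite KLdivE big_bool. Qed.

Lemma KL_refl (T : finType) (P : T -> R) : KLdiv P P = 0.
Proof. by rewrite KLdivE big1 // => t _; rewrite Tf_refl. Qed.

Lemma KL_BEC e (a b : bool -> R) : \sum_x a x = 1 -> \sum_x b x = 1 ->
  KLdiv (chan_out (BEC e) a) (chan_out (BEC e) b) = (1 - e) * KLdiv a b.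
Proof.
move=> ha hb.
have oN (c : bool -> R) : \sum_x c x = 1 -> chan_out (BEC e) c None = e.
  by move=> hc; rewrite /chan_out /BEC -mulr_suml hc mul1r.
have oS (c : bool -> R) y : chan_out (BEC e) c (Some y) = c y * (1 - e).
  by rewrite /chan_out big_bool /BEC; case: y => /=; ring.
rewrite KLdivE big_option oN // oN // Tf_refl add0r.
rewrite KLdivE mulr_sumr; apply: eq_bigr => y _.
by rewrite !oS Tf_scaler.
Qed.

Lemma KL_BSC (th : R) (a b : bool -> R) :
  a false = 1 - a true -> b false = 1 - b true -> 0 <= a true <= 1 -> 0 < b true < 1 ->
  0 <= th <= 1 ->
  KLdiv (chan_out (BSC ((1 - th) / 2)) a) (chan_out (BSC ((1 - th) / 2)) b)
   = hh (2 * a true - 1) (2 * b true - 1) th.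
Proof.
move=> af bf ha hb ht.
have hA : -1 <= 2 * a true - 1 <= 1 by case/andP: ha => *; apply/andP; split; lra.
have hB : -1 < 2 * b true - 1 < 1 by case/andP: hb => *; apply/andP; split; lra.
rewrite -(hh_Tf hA hB ht) KL_bool.
have o (c : bool -> R) y : c false = 1 - c true -> chan_out (BSC ((1 - th) / 2)) c y =
   if y then (1 + th * (2 * c true - 1)) / 2 else (1 + th * - (2 * c true - 1)) / 2.
  by move=> cf; rewrite /chan_out big_bool /BSC cf; case: y => /=; field.
by rewrite !o.
Qed.

Lemma KL_id (a b : bool -> R) :
  a false = 1 - a true -> b false = 1 - b true -> 0 <= a true <= 1 -> 0 < b true < 1 ->
  KLdiv a b = hh (2 * a true - 1) (2 * b true - 1) 1.
Proof.
move=> af bf ha hb.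
have hA : -1 <= 2 * a true - 1 <= 1 by case/andP: ha => *; apply/andP; split; lra.
have hB : -1 < 2 * b true - 1 < 1 by case/andP: hb => *; apply/andP; split; lra.
have h01 : 0 <= (1 : R) <= 1 by rewrite ler01 lexx.
rewrite -(hh_Tf hA hB h01) KL_bool af bf.
have e1 (x : R) : (1 + 1 * (2 * x - 1)) / 2 = x by field.
have e2 (x : R) : (1 + 1 * - (2 * x - 1)) / 2 = 1 - x by field.
by rewrite !e1 !e2.
Qed.
Section W.
Variables (l : nat) (p : 'I_(l.*2.+1) -> R).
Hypothesis hp : is_dist p.

Definition mw (i : 'I_(l.*2.+1)) := (p i + p (rev_ord i)) / 2.
Definition th (i : 'I_(l.*2.+1)) := `|(p (rev_ord i) - p i) / (p i + p (rev_ord i))|.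

Lemma W_out (a : bool -> R) i : chan_out (biso p) a i = a true * p (rev_ord i) + a false * p i.
Proof. by rewrite /chan_out big_bool /= /biso_neg. Qed.

Lemma sum_rev (F : 'I_(l.*2.+1) -> R) : \sum_i F (rev_ord i) = \sum_i F i.
Proof. by rewrite [RHS](reindex_inj rev_ord_inj). Qed.

Lemma W_dec (a b : bool -> R) :
  a false = 1 - a true -> b false = 1 - b true -> 0 <= a true <= 1 -> 0 < b true < 1 ->
  KLdiv (chan_out (biso p) a) (chan_out (biso p) b)
   = \sum_i mw i * hh (2 * a true - 1) (2 * b true - 1) (th i).
Proof.
move=> af bf ha hb.
have hA : -1 <= 2 * a true - 1 <= 1 by case/andP: ha => *; apply/andP; split; lra.
have hB : -1 < 2 * b true - 1 < 1 by case/andP: hb => *; apply/andP; split; lra.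
case: hp => p0 p1.
rewrite KLdivE.
set f := fun i => Tf (chan_out (biso p) a i) (chan_out (biso p) b i).
have -> : \sum_i f i = \sum_i (f i + f (rev_ord i)) / 2.
  by rewrite -mulr_suml big_split /= sum_rev; field.
apply: eq_bigr => i _.
rewrite /f !W_out rev_ordK af bf /mw /th.
set m := p i + p (rev_ord i).
have [m0|mn] := eqVneq m 0.
  have z1 : p i = 0 by have := p0 i; have := p0 (rev_ord i); rewrite /m in m0; lra.
  have z2 : p (rev_ord i) = 0 by have := p0 i; have := p0 (rev_ord i); rewrite /m in m0; lra.
  by rewrite m0 z1 z2 !mulr0 !addr0 !Tf0 addr0 !mul0r.
set t := (p (rev_ord i) - p i) / m.
have e1 : a true * p (rev_ord i) + (1 - a true) * p i = m * ((1 + t * (2 * a true - 1)) / 2).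
  by rewrite /t /m; field.
have e2 : b true * p (rev_ord i) + (1 - b true) * p i = m * ((1 + t * (2 * b true - 1)) / 2).
  by rewrite /t /m; field.
have e3 : a true * p i + (1 - a true) * p (rev_ord i) = m * ((1 + t * - (2 * a true - 1)) / 2).
  by rewrite /t /m; field.
have e4 : b true * p i + (1 - b true) * p (rev_ord i) = m * ((1 + t * - (2 * b true - 1)) / 2).
  by rewrite /t /m; field.
have ht : -1 <= t <= 1.
  have mp : 0 < m by rewrite lt_def mn /m addr_ge0.
  have := p0 i; have := p0 (rev_ord i); move=> q1 q2.
  apply/andP; split; [rewrite /t ler_pdivlMr // | rewrite /t ler_pdivrMr //]; rewrite /m; lra.
rewrite e1 e2 e3 e4 !Tf_scale -mulrDr (hh_Tf_abs hA hB ht).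
by rewrite mulrAC.
Qed.

Lemma mw_ge0 i : 0 <= mw i.
Proof. by case: hp => p0 _; rewrite /mw divr_ge0 ?addr_ge0. Qed.

Lemma mw_sum : \sum_i mw i = 1.
Proof.
by case: hp => _ p1; rewrite /mw -mulr_suml big_split /= sum_rev p1; field.
Qed.

Lemma th01 i : 0 <= th i <= 1.
Proof.
case: hp => p0 _; rewrite /th normr_ge0 /=.
have q1 := p0 i; have q2 := p0 (rev_ord i).
have [m0|mn] := eqVneq (p i + p (rev_ord i)) 0.
  by rewrite m0 invr0 mulr0 normr0.
have mp : 0 < p i + p (rev_ord i) by rewrite lt_def mn addr_ge0.
rewrite normrM (gtr0_norm (x := _^-1)) ?invr_gt0 //.
rewrite ler_pdivrMr // mul1r.
by rewrite ler_norml; apply/andP; split; lra.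
Qed.

Definition ss := \sum_i mw i * (th i * th i).

Lemma ss01 : 0 <= ss <= 1.
Proof.
apply/andP; split.
  by apply: sumr_ge0 => i _; apply: mulr_ge0; [exact: mw_ge0|case/andP: (th01 i) => *; nra].
rewrite -mw_sum; apply: ler_sum => i _; rewrite ler_piMr ?mw_ge0 //.
by case/andP: (th01 i) => *; nra.
Qed.

Lemma W_le_s (a b : bool -> R) :
  a false = 1 - a true -> b false = 1 - b true -> 0 <= a true <= 1 -> 0 < b true < 1 ->
  KLdiv (chan_out (biso p) a) (chan_out (biso p) b) <= ss * KLdiv a b.
Proof.
move=> af bf ha hb.
have hA : -1 <= 2 * a true - 1 <= 1 by case/andP: ha => *; apply/andP; split; lra.
have hB : -1 < 2 * b true - 1 < 1 by case/andP: hb => *; apply/andP; split; lra.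
rewrite W_dec // KL_id // /ss mulr_suml; apply: ler_sum => i _.
rewrite -mulrA; apply: ler_wpM2l; first exact: mw_ge0.
exact: (hh_star hA hB (th01 i)).
Qed.

Lemma BSC_le_W (ts : R) (a b : bool -> R) :
  a false = 1 - a true -> b false = 1 - b true -> 0 <= a true <= 1 -> 0 < b true < 1 ->
  0 <= ts -> ts * ts <= ss ->
  KLdiv (chan_out (BSC ((1 - ts) / 2)) a) (chan_out (BSC ((1 - ts) / 2)) b)
   <= KLdiv (chan_out (biso p) a) (chan_out (biso p) b).
Proof.
move=> af bf ha hb ts0 tss.
have hA : -1 <= 2 * a true - 1 <= 1 by case/andP: ha => *; apply/andP; split; lra.
have hB : -1 < 2 * b true - 1 < 1 by case/andP: hb => *; apply/andP; split; lra.
have ts1 : ts <= 1 by case/andP: ss01 => _ h; nra.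
rewrite W_dec // KL_BSC //; last by apply/andP; split.
apply: hh_jensen => //; [exact: mw_ge0|exact: mw_sum|exact: th01].
Qed.
End W.
Lemma bool_dist (a : bool -> R) : is_dist a -> a false = 1 - a true /\ 0 <= a true <= 1.
Proof.
case=> a0 a1; have af := bool_sum1 a1; split => //.
have := a0 false; have := a0 true; rewrite af => *; apply/andP; split; lra.
Qed.

Lemma abs_deg (a b : bool -> R) : is_dist a -> is_dist b -> abs_cont a b ->
  ~ (0 < b true < 1) -> a = b.
Proof.
move=> da db ac hb.
have [af ha] := bool_dist da; have [bf hb'] := bool_dist db.
have [b0|b0] := eqVneq (b true) 0.
  have a0 := ac true b0.
  by apply: funext; case; [rewrite a0 b0|rewrite af bf a0 b0].
have [b1|b1] := eqVneq (b true) 1.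
  have bf0 : b false = 0 by rewrite bf b1 subrr.
  have a0 := ac false bf0.
  have at1 : a true = 1 by move: a0; rewrite af; lra.
  by apply: funext; case; [rewrite at1 b1|rewrite a0 bf0].
exfalso; apply: hb; case/andP: hb' => h1 h2.
by apply/andP; split; rewrite lt_def ?h1 ?h2 ?b0 // eq_sym b1.
Qed.

Section E.
Variables (l : nat) (p : 'I_(l.*2.+1) -> R).
Hypothesis hp : is_dist p.

Definition Sset := [set r : R | exists P Q : bool -> R,
         [/\ is_dist P, is_dist Q, abs_cont P Q, 0 < KLdiv P Q &
             r = KLdiv (chan_out (biso p) P) (chan_out (biso p) Q) / KLdiv P Q]].

Lemma etaE : etaKL (biso p) = sup Sset.
Proof. by []. Qed.

Lemma S_ub : ubound Sset (ss p).
Proof.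
move=> r [P [Q [dP dQ ac KLp ->]]].
have [hb|hb] := pselect (0 < Q true < 1); last first.
  by move: KLp; rewrite (abs_deg dP dQ ac hb) KL_refl ltxx.
have [af ha] := bool_dist dP; have [bf _] := bool_dist dQ.
rewrite ler_pdivrMr //.
exact: (W_le_s hp).
Qed.

Lemma eta_le_ss : etaKL (biso p) <= ss p.
Proof.
rewrite etaE.
have [[r Sr]|] := pselect (exists r, Sset r).
  by apply: ge_sup; [exists r|exact: S_ub].
move=> nS; have -> : Sset = set0.
  by apply/seteqP; split => // r Sr; apply: nS; exists r.
rewrite sup0; case/andP: (ss01 hp) => //.
Qed.

Lemma W_le_eta (a b : bool -> R) : is_dist a -> is_dist b -> abs_cont a b -> 0 < b true < 1 ->
  KLdiv (chan_out (biso p) a) (chan_out (biso p) b) <= etaKL (biso p) * KLdiv a b.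
Proof.
move=> da db ac hb.
have [af ha] := bool_dist da; have [bf _] := bool_dist db.
have hA : -1 <= 2 * a true - 1 <= 1 by case/andP: ha => *; apply/andP; split; lra.
have hB : -1 < 2 * b true - 1 < 1 by case/andP: hb => *; apply/andP; split; lra.
have k0 : 0 <= KLdiv a b.
  by rewrite KL_id //; apply: hh_ge0 => //; rewrite ler01 lexx.
have [kz|kn] := eqVneq (KLdiv a b) 0.
  by have := W_le_s hp af bf ha hb; rewrite kz !mulr0.
have kp : 0 < KLdiv a b by rewrite lt_def kn k0.
set r := KLdiv (chan_out (biso p) a) (chan_out (biso p) b) / KLdiv a b.
have Sr : Sset r by exists a, b; split.
have : r <= etaKL (biso p).
  rewrite etaE; apply: sup_upper_bound => //; split; [by exists r|by exists (ss p); exact: S_ub].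
by rewrite /r ler_pdivrMr // mulrC.
Qed.
End E.
Lemma rowW (l : nat) (p : 'I_(l.*2.+1) -> R) : is_dist p -> forall x, \sum_y biso p x y = 1.
Proof.
case=> _ p1 [] /=; last exact: p1.
by rewrite /biso /biso_neg sum_rev.
Qed.

Lemma rowBEC (e : R) x : \sum_y BEC e x y = 1.
Proof. by rewrite big_option big_bool /BEC; case: x => /=; ring. Qed.

Lemma rowBSC (d : R) x : \sum_y BSC d x y = 1.
Proof. by rewrite big_bool /BSC; case: x => /=; ring. Qed.

Lemma per_u (U X : finType) (PUX : U * X -> R) (u : U) : is_dist PUX -> marg1 PUX u != 0 ->
  [/\ is_dist (fun x => PUX (u, x) / marg1 PUX u), is_dist (marg2 PUX)
    & abs_cont (fun x => PUX (u, x) / marg1 PUX u) (marg2 PUX)].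
Proof.
move=> [P0 P1] wn.
have w0 : 0 <= marg1 PUX u by apply: sumr_ge0 => x _; exact: P0.
split.
- split; first by move=> x; apply: divr_ge0.
  by rewrite -mulr_suml mulfV.
- split; first by move=> x; apply: sumr_ge0 => *; exact: P0.
  rewrite /marg2 exchange_big /= pair_bigA /= -P1; apply: eq_bigr; by case.
- move=> x /eqP; rewrite /marg2 psumr_eq0; last by move=> *; exact: P0.
  by move=> /allP /(_ u (mem_index_enum _)) /implyP /(_ isT) /eqP ->; rewrite mul0r.
Qed.
End C.

Unset Implicit Arguments.

Theorem theorem1 (R : realType) (l : nat) (p : 'I_(l.*2.+1) -> R) :
  (0 < l)%N -> is_dist p ->
  let W := biso p in
  let eta := etaKL W in
  less_noisy (BEC (1 - eta)) W /\ less_noisy W (BSC ((1 - Num.sqrt eta) / 2)).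
Proof.
move=> _ hp W eta.
split => U PUX dP.
  rewrite !mutinf_dec //; last exact: rowW; last exact: rowBEC.
  apply: ler_sum => u _.
  have [w0|wn] := eqVneq (marg1 PUX u) 0; first by rewrite w0 !mul0r.
  have [da db ac] := per_u dP wn.
  apply: ler_wpM2l; first by apply: sumr_ge0 => x _; case: dP.
  rewrite KL_BEC; [|by case: da|by case: db].
  rewrite (_ : 1 - (1 - eta) = eta); last by ring.
  have [hb|hb] := pselect (0 < marg2 PUX true < 1); first exact: W_le_eta.
  by rewrite (abs_deg da db ac hb) !KL_refl mulr0.
rewrite !mutinf_dec //; last exact: rowBSC; last exact: rowW.
apply: ler_sum => u _.
have [w0|wn] := eqVneq (marg1 PUX u) 0; first by rewrite w0 !mul0r.
have [da db ac] := per_u dP wn.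
apply: ler_wpM2l; first by apply: sumr_ge0 => x _; case: dP.
have [hb|hb] := pselect (0 < marg2 PUX true < 1); last first.
  by rewrite (abs_deg da db ac hb) !KL_refl.
have [af ha] := bool_dist da; have [bf _] := bool_dist db.
apply: (BSC_le_W hp) => //; first exact: sqrtr_ge0.
have hs := eta_le_ss hp.
have [e0|e0] := leP 0 eta.
  by rewrite -expr2 sqr_sqrtr.
rewrite ler0_sqrtr ?mul0r; last exact: ltW.
by case/andP: (ss01 hp).
Qed.
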